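(* Let $\mathbb{X},\mathbb{Y}$ be finite-dimensional real Banach spaces, $T\in\mathbb{L}(\mathbb{X},\mathbb{Y})$, and let $F$ be a face of $B_{\mathbb{X}}$ with $T(F)\neq\{0\}$. Then $T$ preserves TEA pairs contained in $F$ (i.e. $(Tx,Ty)$ is a TEA pair in $\mathbb{Y}$ for all $x,y\in F$) if and only if there exists $u\in F$ such that $J(Tu)\subset J(Tv)$ for all $v\in F\setminus\ker T$.
   Context: A face of $B_{\mathbb{X}}$ is a nonempty convex subset $F\subset S_{\mathbb{X}}$ such that whenever $x_1,x_2\in S_{\mathbb{X}}$, $0<t<1$ and $(1-t)x_1+tx_2\in F$, then $x_1,x_2\in F$. For non-zero $y$, $J(y)=\{g\in S_{\mathbb{Y}^*}: g(y)=\|y\|\}$. $(x,y)$ is a TEA pair if $\|x+y\|=\|x\|+\|y\|$. *)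

(* Defs.v *)
From HB Require Import structures.
From mathcomp Require Import all_boot all_order all_algebra.
From mathcomp Require Import all_classical all_reals all_analysis.
Set Implicit Arguments. Unset Strict Implicit. Unset Printing Implicit Defensive.
Import Order.TTheory GRing.Theory Num.Theory.
Import numFieldNormedType.Exports.
Local Open Scope ring_scope.
Local Open Scope classical_set_scope.

Definition finite_dim (R : realType) (X : normedModType R) : Prop :=
  exists n : nat, exists f : {linear 'rV[R]_n -> X}, bijective f.

Definition unit_sphere (R : realType) (X : normedModType R) : set X :=
  [set x | `|x| = 1].

Definition is_face (R : realType) (X : normedModType R) (F : set X) : Prop :=
  [/\ F !=set0,
      F `<=` @unit_sphere _ X,
      (forall x1 x2 t, F x1 -> F x2 -> 0 <= t <= 1 ->
          F ((1 - t) *: x1 + t *: x2)) &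
      (forall x1 x2 t, @unit_sphere _ X x1 -> @unit_sphere _ X x2 -> 0 < t < 1 ->
          F ((1 - t) *: x1 + t *: x2) -> F x1 /\ F x2)].

Definition TEA (R : realType) (X : normedModType R) (x y : X) : Prop :=
  `|x + y| = `|x| + `|y|.

Definition lin_functional (R : realType) (Y : normedModType R) (g : Y -> R) : Prop :=
  forall (a : R) (u v : Y), g (a *: u + v) = a * g u + g v.

Definition dual_unit_sphere (R : realType) (Y : normedModType R) : set (Y -> R) :=
  [set g | lin_functional g /\
           (forall z : Y, `|z| <= 1 -> `|g z| <= 1) /\
           (forall e : R, 0 < e -> exists z : Y, `|z| <= 1 /\ 1 - e < `|g z|)].

Definition J (R : realType) (Y : normedModType R) (y : Y) : set (Y -> R) :=
  [set g | @dual_unit_sphere _ Y g /\ g y = `|y|].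

(* Main.v *)
Require Import Defs.
From HB Require Import structures.
From mathcomp Require Import all_boot all_order all_algebra.
From mathcomp Require Import all_classical all_reals all_analysis.
From mathcomp Require Import ring lra.
Import Order.TTheory GRing.Theory Num.Theory.
Import numFieldNormedType.Exports.
Local Open Scope ring_scope.
Local Open Scope classical_set_scope.
Lemma lin_g0 {R : realType} {Y : normedModType R} {g : Y -> R} :
  lin_functional g -> g 0 = 0.
Proof. by move=> lg; have := lg 1 0 0; rewrite scale1r addr0 mul1r; lra. Qed.

Lemma lin_gZ {R : realType} {Y : normedModType R} {g : Y -> R} a u :
  lin_functional g -> g (a *: u) = a * g u.
Proof. by move=> lg; have := lg a u 0; rewrite addr0 (lin_g0 lg) addr0. Qed.

Lemma lin_gD {R : realType} {Y : normedModType R} {g : Y -> R} u v :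
  lin_functional g -> g (u + v) = g u + g v.
Proof. by move=> lg; have := lg 1 u v; rewrite scale1r mul1r. Qed.

Lemma dual_le {R : realType} {Y : normedModType R} {g : Y -> R} z :
  dual_unit_sphere g -> g z <= `|z|.
Proof.
case=> lg [b _]; have [->|z0] := eqVneq z 0; first by rewrite (lin_g0 lg) normr0.
have zp : 0 < `|z| by rewrite normr_gt0.
have n1 : `| (`|z|)^-1 *: z| <= 1.
  by rewrite normrZ ger0_norm ?invr_ge0 // mulVf ?gt_eqF.
have := b _ n1; rewrite (lin_gZ _ _ lg) => h.
have : `|z|^-1 * g z <= 1 by apply: le_trans h; apply: ler_norm.
by rewrite ler_pdivrMl // mulr1.
Qed.

Lemma TEA_scale {R : realType} {Y : normedModType R} (a b : Y) s t :
  `|a + b| = `|a| + `|b| -> 0 <= s -> 0 <= t ->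
  `|s *: a + t *: b| = s * `|a| + t * `|b|.
Proof.
move=> h s0 t0; apply/le_anti/andP; split.
  by apply: le_trans (ler_normD _ _) _; rewrite !normrZ !ger0_norm.
have [st|ts] := lerP s t.
  have e : t *: (a + b) = (s *: a + t *: b) + (t - s) *: a.
    by rewrite scalerBl scalerDr addrAC addrCA subrr addr0.
  have := ler_normD (s *: a + t *: b) ((t - s) *: a).
  rewrite -e !normrZ !ger0_norm ?subr_ge0 // h; lra.
have e : s *: (a + b) = (s *: a + t *: b) + (s - t) *: b.
  by rewrite scalerBl scalerDr -addrA [t *: b + _]addrCA subrr addr0.
have := ler_normD (s *: a + t *: b) ((s - t) *: b).
have st0 : 0 <= s - t by rewrite subr_ge0 ltW.
rewrite -e !normrZ (ger0_norm s0) (ger0_norm st0) h; lra.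
Qed.
Definition subsp {R : realType} {Y : normedModType R} (M : set Y) :=
  M 0 /\ forall a u v, M u -> M v -> M (a *: u + v).
Definition good {R : realType} {Y : normedModType R} (M : set Y) (f : Y -> R) :=
  (forall a u v, M u -> M v -> f (a *: u + v) = a * f u + f v) /\
  (forall u, M u -> f u <= `|u|).
Definition ext {R : realType} {Y : normedModType R} (M : set Y) (z : Y) : set Y :=
  [set w | exists m a, M m /\ w = m + a *: z].

Lemma ext_subsp {R : realType} {Y : normedModType R} (M : set Y) z :
  subsp M -> subsp (ext M z).
Proof.
case=> M0 Ml; split; first by exists 0, 0; rewrite scale0r addr0.
move=> a u v [m1 [a1 [h1 ->]]] [m2 [a2 [h2 ->]]].
exists (a *: m1 + m2), (a * a1 + a2); split; first exact: Ml.
by rewrite scalerDr scalerDl scalerA addrACA.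
Qed.

Lemma ext_sub {R : realType} {Y : normedModType R} (M : set Y) z :
  M `<=` ext M z.
Proof. by move=> m Mm; exists m, 0; rewrite scale0r addr0. Qed.

Lemma good_f0 {R : realType} {Y : normedModType R} {M : set Y} {f} :
  subsp M -> good M f -> f 0 = 0.
Proof.
case=> M0 _ [fl _]; have := fl 1 0 0 M0 M0.
rewrite scale1r addr0 mul1r; lra.
Qed.

Lemma good_fZ {R : realType} {Y : normedModType R} {M : set Y} {f} a u :
  subsp M -> good M f -> M u -> f (a *: u) = a * f u.
Proof.
move=> sM gf Mu; have := proj1 gf a u 0 Mu (proj1 sM).
by rewrite addr0 (good_f0 sM gf) addr0.
Qed.

Lemma decomp_uniq {R : realType} {Y : normedModType R} {M : set Y} {z m1 m2 a1 a2} :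
  subsp M -> ~ M z -> M m1 -> M m2 -> m1 + a1 *: z = m2 + a2 *: z ->
  a1 = a2 /\ m1 = m2.
Proof.
move=> [M0 Ml] Mz h1 h2 e.
have aa : a1 = a2.
  apply/eqP; apply/negP => /negP ne; apply: Mz.
  have d : (a1 - a2) *: z = m2 - m1.
    rewrite scalerBl; apply: (addrI m1).
    by rewrite addrA e addrK addrCA subrr addr0.
  have -> : z = (a1 - a2)^-1 *: ((-1) *: m1 + m2) + 0.
    rewrite addr0 scaleN1r [- m1 + _]addrC -d scalerA mulVf ?scale1r //.
    by rewrite subr_eq0.
  by apply: (Ml) => //; apply: (Ml).
by split => //; move: e; rewrite aa => /addIr.
Qed.

Lemma subspZ {R : realType} {Y : normedModType R} {M : set Y} a u :
  subsp M -> M u -> M (a *: u).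
Proof. by move=> [M0 Ml] Mu; rewrite -[_ *: _]addr0; apply: Ml. Qed.

Lemma ext_step_c {R : realType} {Y : normedModType R} {M : set Y} {f z c} :
  subsp M -> good M f -> ~ M z ->
  (forall m, M m -> f m - `|m - z| <= c) ->
  (forall m, M m -> c <= `|m + z| - f m) ->
  exists f', good (ext M z) f' /\ (forall m, M m -> f' m = f m) /\ f' z = c.
Proof.
move=> sM gf Mz lo hi.
have [f' hf'] : exists f' : Y -> R,
    forall w m a, M m -> w = m + a *: z -> f' w = f m + a * c.
  have H : forall w, exists r : R,
      forall m a, M m -> w = m + a *: z -> r = f m + a * c.
    move=> w; have [[m [a [Mm ew]]]|nd] :=
      pselect (exists m a, M m /\ w = m + a *: z).
      exists (f m + a * c) => m' a' Mm' ew'.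
      have [-> ->] := decomp_uniq sM Mz Mm Mm' (etrans (esym ew) ew').
      by [].
    by exists 0 => m a Mm ew; exfalso; apply: nd; exists m, a.
  by case: (choice H) => g hg; exists g => w m a Mm ew; apply: hg.
exists f'; split; [split|split].
- move=> a u v [m1 [a1 [h1 ->]]] [m2 [a2 [h2 ->]]].
  rewrite (hf' _ (a *: m1 + m2) (a * a1 + a2)); last first.
  + by rewrite scalerDr scalerDl scalerA addrACA.
  + by apply: (proj2 sM).
  rewrite (hf' _ m1 a1) // (hf' _ m2 a2) // (proj1 gf) //; ring.
- move=> u [m [a [Mm ->]]]; rewrite (hf' _ m a) //.
  have Mi : forall b, M (b *: m) by move=> b; apply: subspZ.
  have [a0|a0|->] := ltrgtP a 0.
  + have b0 : 0 < - a by rewrite oppr_gt0.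
    have := lo _ (Mi (- a)^-1); rewrite (good_fZ _ _ sM gf Mm).
    have -> : (- a)^-1 *: m - z = (- a)^-1 *: (m + a *: z).
      by rewrite scalerDr scalerA invrN mulNr mulVf ?scaleN1r // ltr0_neq0.
    have bi : 0 <= (- a)^-1 by rewrite invr_ge0 ltW.
    rewrite normrZ (ger0_norm bi) -mulrBr ler_pdivrMl //.
    lra.
  + have := hi _ (Mi a^-1); rewrite (good_fZ _ _ sM gf Mm).
    have -> : a^-1 *: m + z = a^-1 *: (m + a *: z).
      by rewrite scalerDr scalerA mulVf ?lt0r_neq0 // scale1r.
    have bi : 0 <= a^-1 by rewrite invr_ge0 ltW.
    rewrite normrZ (ger0_norm bi) -mulrBr ler_pdivlMl //.
    lra.
  + by rewrite scale0r addr0 mul0r addr0; apply: (proj2 gf).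
- by move=> m Mm; rewrite (hf' _ m 0) // ?scale0r ?addr0 ?mul0r ?addr0.
- rewrite (hf' _ 0 1) ?(good_f0 sM gf) ?add0r ?mul1r ?scale1r //.
  exact: (proj1 sM).
Qed.

Lemma good_sub {R : realType} {Y : normedModType R} (M M' : set Y) f :
  M' `<=` M -> good M f -> good M' f.
Proof. by move=> s [fl fd]; split=> [a u v hu hv|u hu]; [apply: fl|apply: fd]; apply: s. Qed.

Lemma ext_step {R : realType} {Y : normedModType R} (M : set Y) f z :
  subsp M -> good M f ->
  exists f', good (ext M z) f' /\ (forall m, M m -> f' m = f m).
Proof.
move=> sM gf; have [Mz|Mz] := pselect (M z).
  exists f; split => //; apply: good_sub gf => w [m [a [Mm ->]]].
  by rewrite addrC; apply: (proj2 sM).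
have key : forall m m', M m -> M m' -> f m - `|m - z| <= `|m' + z| - f m'.
  move=> m m' Mm Mm'.
  have e : f (m + m') = f m + f m'.
    by have := proj1 gf 1 m m' Mm Mm'; rewrite scale1r mul1r.
  have Mmm : M (m + m') by rewrite -[m]scale1r; apply: (proj2 sM).
  have := proj2 gf _ Mmm; rewrite e.
  have := ler_normD (m - z) (m' + z); rewrite addrACA addNr addr0.
  lra.
set A := [set f m - `|m - z| | m in M].
have lo : forall m, M m -> f m - `|m - z| <= sup A.
  move=> m Mm; apply: ub_le_sup; last by exists m.
  exists (`|0 + z| - f 0) => x [m' Mm' <-]; exact: key m' 0 Mm' (proj1 sM).
have hi : forall m', M m' -> sup A <= `|m' + z| - f m'.
  move=> m' Mm'; apply: ge_sup.
    by exists (f 0 - `|0 - z|), 0 => //; exact: (proj1 sM).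
  by move=> x [m Mm <-]; apply: key.
have [f' [gf' [ag _]]] := ext_step_c sM gf Mz lo hi.
by exists f'.
Qed.

Lemma norming {R : realType} {Y : normedModType R} (y : Y) :
  finite_dim Y -> y != 0 -> exists g, J y g.
Proof.
move=> [n [phi [psi phiK psiK]]] y0.
case: n phi psi phiK psiK => [|n] phi psi phiK psiK.
  by move: y0; rewrite -(psiK y) (thinmx0 (psi y)) linear0 eqxx.
pose zz := fun k : nat => phi (delta_mx 0 (inord k)).
pose S := fix S k := match k with 0 => ext [set 0] y | k'.+1 => ext (S k') (zz k') end.
have sub0 : @subsp R Y [set 0].
  by split => // a u v -> ->; rewrite scaler0 addr0.
have subS : forall k, subsp (S k).
  by elim=> [|k IH] /=; apply: ext_subsp.
have yS : forall k, S k y.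
  elim=> [|k IH] /=; last exact: ext_sub.
  by exists 0, 1; rewrite scale1r add0r.
have goodS : forall k, exists f, good (S k) f /\ f y = `|y|.
  elim=> [|k [f [gf fy]]] /=.
    have g0 : good [set 0] (fun _ : Y => (0 : R)).
      by split=> [a u v _ _|u _]; rewrite ?mulr0 ?addr0.
    have ny : ~ [set 0] y by move=> /= e; move: y0; rewrite e eqxx.
    have lo : forall m, [set 0] m -> (fun _ : Y => (0:R)) m - `|m - y| <= `|y|.
      by move=> m /= ->; have := normr_ge0 y; rewrite [0 - y]sub0r normrN; lra.
    have hi : forall m, [set 0] m -> `|y| <= `|m + y| - (fun _ : Y => (0:R)) m.
      by move=> m /= ->; rewrite add0r subr0.
    have [f [gf [_ fy]]] := ext_step_c sub0 g0 ny lo hi.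
    by exists f.
  have [f' [gf' ag]] := ext_step _ _ (zz k) (subS k) gf.
  by exists f'; split => //; rewrite ag.
have spanS : forall k (c : nat -> R), S k (\sum_(i < k) c i *: zz i).
  elim=> [|k IH] c /=; first by rewrite big_ord0; exists 0, 0; rewrite !scale0r addr0.
  by rewrite big_ord_recr /=; exists (\sum_(i < k) c i *: zz i), (c k).
have allS : forall w, S n.+1 w.
  move=> w; have := spanS n.+1 (fun i => psi w 0 (inord i)).
  suff -> : \sum_(i < n.+1) psi w 0 (inord i) *: zz i = w by [].
  rewrite -{2}(psiK w) {2}(row_sum_delta (psi w)) linear_sum.
  by apply: eq_bigr => i _; rewrite linearZ /zz inord_val.
have [f [gf fy]] := goodS n.+1.
have f0 : f 0 = 0 := good_f0 (subS _) gf.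
have fZ : forall a u, f (a *: u) = a * f u.
  by move=> a u; apply: (good_fZ _ _ (subS _) gf).
have fn : forall u, `|f u| <= `|u|.
  move=> u; rewrite ler_norml (proj2 gf _ (allS u)) andbT.
  have := proj2 gf _ (allS (- u)); rewrite -scaleN1r fZ normrZ normrN normr1.
  lra.
have ny : 0 < `|y| by rewrite normr_gt0.
exists f; split=> //; split; [|split].
- by move=> a u v; apply: (proj1 gf); apply: allS.
- by move=> z zle; apply: le_trans (fn z) zle.
- move=> e e0; exists (`|y|^-1 *: y); split.
    by rewrite normrZ ger0_norm ?invr_ge0 // mulVf ?gt_eqF.
  by rewrite fZ fy mulVf ?gt_eqF // normr1; lra.
Qed.

Lemma span_coef {K : fieldType} {vT : vectType K} {A : Type} (f : A -> vT)
  (s : seq A) (x0 : A) (v : vT) :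
  v \in <<map f s>>%VS ->
  exists c : 'I_(size s) -> K, v = \sum_i c i *: f (nth x0 s i).
Proof.
elim: s v => [|x s IH] v /=.
  by rewrite span_nil memv0 => /eqP ->; exists (fun _ => 0); rewrite big_ord0.
rewrite span_cons => /memv_addP [u /vlineP [a ->] [w /IH [c ->] ->]].
exists (fun i : 'I_(size s).+1 => if unlift ord0 i is Some j then c j else a).
rewrite big_ord_recl unlift_none /=; congr (_ + _); apply: eq_bigr => i _.
by rewrite liftK add0n.
Qed.

Lemma convF {R : realType} {X : normedModType R} (F : set X) :
  is_face F -> forall (s : seq X) (w : 'I_(size s) -> R),
  (forall i : 'I_(size s), F (s`_i)) -> (forall i, 0 <= w i) ->
  \sum_i w i = 1 -> F (\sum_i w i *: s`_i).
Proof.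
case=> _ _ hc _; elim=> [|a s IH] w hF hw hs.
  by move: hs; rewrite big_ord0 => /eqP; rewrite eq_sym oner_eq0.
move: hs; rewrite !big_ord_recl /= => hs.
set t := \sum_(i < size s) w (lift ord0 i) in hs.
have t0 : 0 <= t by apply: sumr_ge0 => i _.
have Fa : F a by apply: (hF ord0).
have [te|tn] := eqVneq t 0.
  have z : forall i, w (lift ord0 i) = 0.
    by move=> i; apply: (psumr_eq0P (P := predT) (fun i _ => hw (lift ord0 i)) te).
  rewrite big1 ?addr0; last by move=> i _; rewrite z scale0r.
  have -> : w ord0 = 1 by rewrite te addr0 in hs.
  by rewrite scale1r.
have tp : 0 < t by rewrite lt0r tn.
have Fv : F (\sum_(i < size s) (w (lift ord0 i) / t) *: s`_i).
  apply: IH.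
  - by move=> i; apply: (hF (lift ord0 i)).
  - by move=> i; apply: divr_ge0.
  - by rewrite -mulr_suml mulfV.
have := hc a _ t Fa Fv; rewrite t0 /=.
have -> : w ord0 = 1 - t by rewrite -hs addrK.
rewrite scaler_sumr.
have -> : \sum_(i < size s) t *: (w (lift ord0 i) / t *: s`_i) =
          \sum_(i < size s) w (lift ord0 i) *: s`_i.
  by apply: eq_bigr => i _; rewrite scalerA mulrC divfK.
apply; rewrite -hs lerDr; exact: hw.
Qed.

Lemma sum_ge_term {R : realType} {I : finType} (G : I -> R) i :
  (forall j, 0 <= G j) -> G i <= \sum_j G j.
Proof.
move=> h; rewrite (bigD1 i) //= lerDl; apply: sumr_ge0 => j _; exact: h.
Qed.

Theorem mainTheorem12 (R : realType) (X Y : normedModType R)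
  (hX : finite_dim X) (hY : finite_dim Y)
  (T : {linear X -> Y}) (F : set X)
  (hF : is_face F) (hTF : exists x, F x /\ T x != 0) :
  (forall x y, F x -> F y -> TEA (T x) (T y)) <->
  (exists u, F u /\ forall v, F v -> T v != 0 -> J (T u) `<=` J (T v)).
Proof.
case: hTF => x0 [Fx0 Tx0].
split.
- move=> hT.
  case: (hY) => n [phi [psi phiK psiK]].
  pose V := fun s : seq X => (<<map (fun x => psi (T x)) s>>%VS : {vspace 'rV[R]_n}).
  pose P := fun k => `[< exists s : seq X, [/\ s != [::],
     (forall i : 'I_(size s), F s`_i) & \dim (V s) = k] >].
  have exP : exists k, P k.
    exists (\dim (V [:: x0])); apply/asboolP; exists [:: x0]; split => //.
    by move=> [[|j] hj].
  have ubP : forall k, P k -> (k <= \dim (fullv : {vspace 'rV[R]_n}))%N.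
    by move=> k /asboolP [s [_ _ <-]]; apply: dimvS; apply: subvf.
  case: (ex_maxnP exP ubP) => k /asboolP [s [sne Fs dk]] kmax.
  have Tspan : forall v, F v ->
      exists c : 'I_(size s) -> R, T v = \sum_i c i *: T s`_i.
    move=> v Fv.
    have Pv : P (\dim (V (v :: s))).
      apply/asboolP; exists (v :: s); split => //.
      move=> [[|j] hj] //=; exact: (Fs (Ordinal (hj : (j < size s)%N))).
    have le := kmax _ Pv.
    have sub : (V s <= V (v :: s))%VS.
      by apply: sub_span => y hy; rewrite /= in_cons hy orbT.
    have eqV : V s = V (v :: s).
      by apply/eqP; rewrite eqEdim sub dk le.
    have mem : psi (T v) \in V s.
      by rewrite eqV; apply: memv_span; rewrite /= in_cons eqxx.
    have [c hc] := span_coef (fun x => psi (T x)) s 0 _ mem.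
    exists c; rewrite -[T v]psiK hc linear_sum; apply: eq_bigr => i _.
    by rewrite linearZ psiK.
  set m := size s in Tspan Fs *.
  have mpos : (0 < m)%N by rewrite /m; case: (s) sne.
  have mR : 0 < m%:R :> R by rewrite ltr0n.
  pose u := \sum_(i < m) m%:R^-1 *: s`_i.
  have Fu : F u.
    apply: convF => //; try by move=> i; rewrite invr_ge0 ler0n.
    by rewrite sumr_const card_ord -[_ *+ size s]mulr_natr mulVf // gt_eqF.
  exists u; split => // v Fv Tv0 g [gd gu].
  have [c hcv] := Tspan v Fv.
  set B := 1 + \sum_i `|c i|.
  have sB : forall i, c i < B.
    move=> i; apply: (le_lt_trans (ler_norm _)).
    have := sum_ge_term (fun j => `|c j|) i (fun j => normr_ge0 _).
    rewrite /B; lra.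
  have B0 : 0 < B.
    have : 0 <= \sum_i `|c i| by apply: sumr_ge0 => j _.
    rewrite /B; lra.
  set e := (m%:R * B)^-1.
  have e0 : 0 < e by rewrite invr_gt0 mulr_gt0.
  have eB : e * B = m%:R^-1 by rewrite /e invfM -mulrA mulVf ?mulr1 // gt_eqF.
  pose w := fun i => m%:R^-1 - e * c i.
  have wpos : forall i, 0 < w i.
    move=> i; rewrite /w subr_gt0 -eB ltr_pM2l //.
  set t := \sum_i w i.
  have tp : 0 < t.
    apply: (lt_le_trans (wpos (Ordinal mpos))).
    by apply: sum_ge_term => j; apply: ltW.
  pose w' := fun i => w i / t.
  pose z := \sum_i w' i *: s`_i.
  have Fz : F z.
    apply: convF => //; try by move=> i; apply: divr_ge0; apply: ltW.
    by rewrite -mulr_suml mulfV // gt_eqF.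
  have eq : T u = e *: T v + t *: T z.
    rewrite /u /z !linear_sum hcv !scaler_sumr -big_split.
    apply: eq_bigr => i _ /=.
    rewrite !linearZ /= !scalerA -scalerDl /w' divfK ?gt_eqF //.
    by congr (_ *: _); rewrite /w; ring.
  have nTu : `|T u| = e * `|T v| + t * `|T z|.
    by rewrite eq; apply: TEA_scale; [exact: hT | exact: ltW | exact: ltW].
  have gTu : g (T u) = e * g (T v) + t * g (T z).
    by rewrite eq (lin_gD _ _ (proj1 gd)) !(lin_gZ _ _ (proj1 gd)).
  have h1 := dual_le (T v) gd; have h2 := dual_le (T z) gd.
  split => //; rewrite gTu nTu in gu; nra.
- case=> u [Fu hu] x y Fx Fy.
  have [g Jg] : exists g, J (T u) g.
    have [Tu0|Tu0] := eqVneq (T u) 0; last exact: norming.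
    have [g [gd _]] := norming (T x0) hY Tx0.
    by exists g; split => //; rewrite Tu0 (lin_g0 (proj1 gd)) normr0.
  have gv : forall v, F v -> g (T v) = `|T v|.
    move=> v Fv; have [Tv0|Tv0] := eqVneq (T v) 0.
      by rewrite Tv0 normr0; apply: lin_g0; exact: (proj1 (proj1 Jg)).
    by have [_ ->] := hu v Fv Tv0 g Jg.
  rewrite /TEA; apply/le_anti/andP; split; first exact: ler_normD.
  have := dual_le (T x + T y) (proj1 Jg).
  by rewrite (lin_gD _ _ (proj1 (proj1 Jg))) !gv.
Qed.
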